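(* Let $(G,\mathcal{P})$ be a group pair and $n\in\mathbb{N}$ with $n\ge1$. The following are equivalent: (i) $(G,\mathcal{P})$ is of type $\mathsf{FP}_n$; (ii) the $\mathbb{Z}G$-module $\Delta_{G/\mathcal{P}}$ is finitely generated and for every $k=1,\dots,n-1$ and every exact sequence of $\mathbb{Z}G$-modules $P_k\xrightarrow{\partial_k}P_{k-1}\to\cdots\to P_1\xrightarrow{\partial_1}P_0\oplus\mathbb{Z}[G/\mathcal{P}]\xrightarrow{\eta+\varepsilon}\mathbb{Z}\to0$ with each $P_i$ ($i=0,\dots,k$) finitely generated projective (and $\eta\colon P_0\to\mathbb{Z}$ a $\mathbb{Z}G$-map), the module $\ker(\partial_k)$ is finitely generated; (iii) there is an exact sequence of $\mathbb{Z}G$-modules $L_n\to L_{n-1}\to\cdots\to L_1\to L_0\oplus\mathbb{Z}[G/\mathcal{P}]\xrightarrow{\eta+\varepsilon}\mathbb{Z}\to0$ with each $L_i$ ($i=0,\dots,n$) finitely generated free (and $\eta\colon L_0\to\mathbb{Z}$ a $\mathbb{Z}G$-map).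
   Context: A group pair $(G,\mathcal{P})$: $G$ finitely generated, $\mathcal{P}$ a non-empty finite collection of subgroups (repetitions allowed). $\mathbb{Z}[G/\mathcal{P}]=\bigoplus_{P\in\mathcal{P}}\bigoplus_{gP\in G/P}\mathbb{Z}$ is the permutation $\mathbb{Z}G$-module, $\varepsilon\colon\mathbb{Z}[G/\mathcal{P}]\to\mathbb{Z}$ the augmentation that is the identity on each summand, $\Delta_{G/\mathcal{P}}=\ker\varepsilon$; $\mathbb{Z}$ is the trivial module. $(G,\mathcal{P})$ is of type $\mathsf{FP}_n$ if $\Delta_{G/\mathcal{P}}$ has a projective $\mathbb{Z}G$-resolution finitely generated in degrees $0,\dots,n-1$. *)

(* Defs.v *)
From Stdlib Require List.
From HB Require Import structures.
From mathcomp Require Import all_boot all_order all_algebra.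
Set Implicit Arguments. Unset Strict Implicit. Unset Printing Implicit Defensive.
Import Order.TTheory GRing.Theory Num.Theory.
Local Open Scope ring_scope.

Record group := Group {
  gcar :> Type;
  gmul : gcar -> gcar -> gcar;
  gone : gcar;
  ginv : gcar -> gcar;
  gmulA : forall x y z, gmul x (gmul y z) = gmul (gmul x y) z;
  gmul1 : forall x, gmul gone x = x;
  gmulV : forall x, gmul (ginv x) x = gone }.

Inductive gen (G : group) (S : seq G) : G -> Prop :=
| gen_in x : Stdlib.Lists.List.In x S -> gen S x
| gen_one : gen S (gone G)
| gen_inv x : gen S x -> gen S (ginv x)
| gen_mul x y : gen S x -> gen S y -> gen S (gmul x y).

Definition fin_gen_group (G : group) : Prop := exists S : seq G, forall g, gen S g.

Record subgroup (G : group) := Subgroup {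
  smem : G -> Prop;
  smem1 : smem (gone G);
  smemM : forall x y, smem x -> smem y -> smem (gmul x y);
  smemV : forall x, smem x -> smem (ginv x) }.

(** * ZG-modules = abelian groups with a G-action by additive maps *)
Record gmod (G : group) := GMod {
  mcar :> zmodType;
  mact : G -> mcar -> mcar;
  mactD : forall g x y, mact g (x + y) = mact g x + mact g y;
  mact1 : forall x, mact (gone G) x = x;
  mactM : forall g h x, mact (gmul g h) x = mact g (mact h x) }.

Arguments mact {G} _ _ _.

Definition is_hom (G : group) (M N : gmod G) (f : M -> N) : Prop :=
  (forall x y, f (x + y) = f x + f y) /\ (forall g x, f (mact M g x) = mact N g (f x)).

Definition Zmod (G : group) : gmod G :=
  @GMod G int (fun _ z => z) (fun _ _ _ => erefl) (fun _ => erefl) (fun _ _ _ => erefl).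

Section DSum.
Variables (G : group) (M N : gmod G).
Definition dsum_act (g : G) (x : (M * N)%type) : (M * N)%type :=
  (mact M g x.1, mact N g x.2).
Lemma dsum_actD g x y : dsum_act g (x + y) = dsum_act g x + dsum_act g y.
Proof. by rewrite /dsum_act /= !mactD. Qed.
Lemma dsum_act1 x : dsum_act (gone G) x = x.
Proof. by case: x => a b; rewrite /dsum_act /= !mact1. Qed.
Lemma dsum_actM g h x : dsum_act (gmul g h) x = dsum_act g (dsum_act h x).
Proof. by rewrite /dsum_act /= !mactM. Qed.
Definition dsum : gmod G := @GMod G (M * N)%type dsum_act dsum_actD dsum_act1 dsum_actM.
End DSum.

Inductive span (G : group) (M : gmod G) (xs : seq M) : M -> Prop :=
| span_in x : x \in xs -> span xs x
| span_0 : span xs 0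
| span_add x y : span xs x -> span xs y -> span xs (x + y)
| span_opp x : span xs x -> span xs (- x)
| span_act g x : span xs x -> span xs (mact M g x).

Definition fg_sub (G : group) (M : gmod G) (A : M -> Prop) : Prop :=
  exists xs : seq M, (forall x, x \in xs -> A x) /\ (forall x, A x -> span xs x).

Definition fg (G : group) (M : gmod G) : Prop := exists xs : seq M, forall x, span xs x.

Definition projective (G : group) (M : gmod G) : Prop :=
  forall (A B : gmod G) (p : A -> B) (f : M -> B),
    is_hom p -> is_hom f -> (forall b, exists a, p a = b) ->
    exists h : M -> A, is_hom h /\ (forall x, p (h x) = f x).

Definition fg_free (G : group) (M : gmod G) : Prop :=
  exists (k : nat) (b : 'I_k -> M), forall (N : gmod G) (y : 'I_k -> N),
    exists f : M -> N, [/\ is_hom f, (forall i, f (b i) = y i) &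
      (forall f' : M -> N, is_hom f' -> (forall i, f' (b i) = y i) -> forall x, f' x = f x)].

(** Z[G/P] for a finite family P_0..P_{m-1} of subgroups: the module generated by
    elements e_i fixed by P_i, universal for this property (Hom(Z[G/P],N) = N^P) *)
Definition is_perm_module (G : group) (m : nat) (Ps : 'I_m -> subgroup G)
    (M : gmod G) (e : 'I_m -> M) : Prop :=
  (forall i p, smem (Ps i) p -> mact M p (e i) = e i) /\
  forall (N : gmod G) (y : 'I_m -> N), (forall i p, smem (Ps i) p -> mact N p (y i) = y i) ->
    exists f : M -> N, [/\ is_hom f, (forall i, f (e i) = y i) &
      (forall f' : M -> N, is_hom f' -> (forall i, f' (e i) = y i) -> forall x, f' x = f x)].

Definition is_augmentation (G : group) (m : nat) (M : gmod G) (e : 'I_m -> M)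
    (eps : M -> Zmod G) : Prop :=
  is_hom eps /\ forall i, eps (e i) = 1.

Definition Delta (G : group) (M : gmod G) (eps : M -> Zmod G) : M -> Prop :=
  fun x => eps x = 0.

(** type FP_n of the pair: Δ has a projective resolution Q_* -> Δ
    finitely generated in degrees 0..n-1 (a : Q_0 -> Z[G/P] has image exactly Δ) *)
Definition pair_FP (G : group) (M : gmod G) (eps : M -> Zmod G) (n : nat) : Prop :=
  exists (Q : nat -> gmod G) (d : forall j, Q j.+1 -> Q j) (a : Q 0%N -> M),
    [/\ is_hom a /\ (forall j, is_hom (d j)),
        (forall x, Delta eps (a x)) /\ (forall y, Delta eps y -> exists x, a x = y),
        (forall x, a x = 0 <-> exists z, d 0%N z = x),
        (forall j (x : Q j.+1), d j x = 0 <-> exists z, d j.+1 z = x) &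
        (forall j, projective (Q j)) /\ (forall j, (j < n)%N -> fg (Q j))].

Definition augC (G : group) (P : nat -> gmod G) (M : gmod G) (i : nat) : gmod G :=
  match i with 0 => dsum (P 0%N) M | j.+1 => P j.+1 end.

Definition etaeps (G : group) (P0 M : gmod G) (eta : P0 -> Zmod G) (eps : M -> Zmod G)
  : dsum P0 M -> Zmod G := fun x => eta x.1 + eps x.2.

(** exactness of C_k -> ... -> C_1 -> C_0 -> Z -> 0 (maps d 0, ..., d (k-1), aug) *)
Definition exact_upto (G : group) (C : nat -> gmod G) (d : forall i, C i.+1 -> C i)
    (aug : C 0%N -> Zmod G) (k : nat) : Prop :=
  [/\ is_hom aug, (forall i, (i < k)%N -> is_hom (d i)),
      (forall z : Zmod G, exists x, aug x = z),
      (forall x, aug x = 0 <-> exists z, d 0%N z = x) &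
      (forall i, (i.+1 < k)%N -> forall x : C i.+1, d i x = 0 <-> exists z, d i.+1 z = x)].

(* Main.v *)
Require Import Defs.
From HB Require Import structures.
From mathcomp Require Import all_boot all_order all_algebra.
From mathcomp Require Import boolp.
From mathcomp Require Import freeg.
From mathcomp Require Import zify.
Set Implicit Arguments. Unset Strict Implicit. Unset Printing Implicit Defensive.
Import Order.TTheory GRing.Theory Num.Theory.
Local Open Scope ring_scope.

Section Basics.
Variable G : group.

Lemma hom0 (M N : gmod G) (f : M -> N) : is_hom f -> f 0 = 0.
Proof. by case=> fD _; move: (fD 0 0); rewrite addr0 => h; apply: (addrI (f 0)); rewrite addr0 -h. Qed.

Lemma homN (M N : gmod G) (f : M -> N) : is_hom f -> forall x, f (- x) = - f x.
Proof.
move=> hf x; apply/eqP; rewrite -(subr_eq0) opprK -hf.1 addNr; apply/eqP; exact: hom0.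
Qed.

Lemma homMn (M N : gmod G) (f : M -> N) : is_hom f -> forall x n, f (x *+ n) = f x *+ n.
Proof. move=> hf x; elim=> [|n IH]; first by rewrite !mulr0n hom0. by rewrite !mulrS hf.1 IH. Qed.

Lemma homMz (M N : gmod G) (f : M -> N) : is_hom f -> forall x z, f (x *~ z) = f x *~ z.
Proof. by move=> hf x [n|n]; rewrite /intmul ?(homN hf) (homMn hf). Qed.

Lemma mact0 (M : gmod G) g : mact M g 0 = 0.
Proof. by move: (@mactD _ M g 0 0); rewrite addr0 => h; apply: (addrI (mact M g 0)); rewrite addr0 -h. Qed.

Lemma mactN (M : gmod G) g x : mact M g (- x) = - mact M g x.
Proof. by apply/eqP; rewrite -subr_eq0 opprK -mactD addNr mact0. Qed.

Lemma mactB (M : gmod G) g x y : mact M g (x - y) = mact M g x - mact M g y.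
Proof. by rewrite mactD mactN. Qed.

Lemma homB (M N : gmod G) (f : M -> N) : is_hom f -> forall x y, f (x - y) = f x - f y.
Proof. by move=> hf x y; rewrite hf.1 (homN hf). Qed.

Lemma hom_comp (M N O : gmod G) (f : M -> N) (g : N -> O) :
  is_hom f -> is_hom g -> is_hom (g \o f).
Proof. by move=> [f1 f2] [g1 g2]; split=> *; rewrite /= ?f1 ?g1 ?f2 ?g2. Qed.

Lemma hom_id (M : gmod G) : is_hom (@id M).
Proof. by []. Qed.

Definition closed (M : gmod G) (S : M -> Prop) :=
  [/\ S 0, (forall x y, S x -> S y -> S (x + y)), (forall x, S x -> S (- x))
    & (forall g x, S x -> S (mact M g x))].

Inductive gspan (M : gmod G) (A : M -> Prop) : M -> Prop :=
| gs_in x : A x -> gspan A x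
| gs_0 : gspan A 0
| gs_add x y : gspan A x -> gspan A y -> gspan A (x + y)
| gs_opp x : gspan A x -> gspan A (- x)
| gs_act g x : gspan A x -> gspan A (mact M g x).

Lemma gspan_closed (M : gmod G) (A : M -> Prop) : closed (gspan A).
Proof. by split; [exact: gs_0|exact: gs_add|exact: gs_opp|exact: gs_act]. Qed.

Lemma span_closed (M : gmod G) (xs : seq M) : closed (Defs.span xs).
Proof. by split; [exact: Defs.span_0|exact: Defs.span_add|exact: Defs.span_opp|exact: Defs.span_act]. Qed.

Lemma gspan_sub (M : gmod G) (A S : M -> Prop) : closed S -> (forall x, A x -> S x) ->
  forall x, gspan A x -> S x.
Proof. by case=> S0 SD SN SA AS x; elim=> //; auto. Qed.

Lemma span_sub (M : gmod G) (xs : seq M) (S : M -> Prop) : closed S ->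
  (forall x, x \in xs -> S x) -> forall x, Defs.span xs x -> S x.
Proof. by case=> S0 SD SN SA AS x; elim=> //; auto. Qed.

Lemma gspan_span (M : gmod G) (xs : seq M) x : gspan (fun y => y \in xs) x -> Defs.span xs x.
Proof. apply: gspan_sub; [exact: span_closed|exact: Defs.span_in]. Qed.

Lemma closed_Mz (M : gmod G) (S : M -> Prop) : closed S -> forall x z, S x -> S (x *~ z).
Proof.
case=> S0 SD SN _ x z Sx.
have Hn n : S (x *+ n) by elim: n => [|n IH]; rewrite ?mulr0n ?mulrS; auto.
by case: z => n; rewrite /intmul; auto.
Qed.

Lemma closed_ker (M N : gmod G) (f : M -> N) : is_hom f -> closed (fun x => f x = 0).
Proof.
move=> hf; split=> [|x y|x|g x]; first exact: hom0.
- by rewrite hf.1 => -> ->; rewrite addr0.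
- by rewrite (homN hf) => ->; rewrite oppr0.
- by rewrite hf.2 => ->; rewrite mact0.
Qed.

Lemma closed_img (M N : gmod G) (f : M -> N) : is_hom f -> closed (fun y => exists x, f x = y).
Proof.
move=> hf; split.
- by exists 0; rewrite hom0.
- by move=> _ _ [x <-] [y <-]; exists (x + y); rewrite hf.1.
- by move=> _ [x <-]; exists (- x); rewrite (homN hf).
- by move=> g _ [x <-]; exists (mact M g x); rewrite hf.2.
Qed.

Lemma span_hom (M N : gmod G) (f : M -> N) (xs : seq M) : is_hom f ->
  forall x, Defs.span xs x -> Defs.span (map f xs) (f x).
Proof.
move=> hf x; elim=> {x}.
- by move=> x xin; apply: Defs.span_in; exact: map_f.
- by rewrite hom0 //; exact: Defs.span_0.
- by move=> x y _ Hx _ Hy; rewrite hf.1; exact: Defs.span_add.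
- by move=> x _ Hx; rewrite (homN hf); exact: Defs.span_opp.
- by move=> g x _ Hx; rewrite hf.2; exact: Defs.span_act.
Qed.

Lemma gspan_hom (M N : gmod G) (f : M -> N) (A : M -> Prop) : is_hom f ->
  forall x, gspan A x -> gspan (fun y => exists2 a, A a & f a = y) (f x).
Proof.
move=> hf x; elim=> {x}.
- by move=> x Ax; apply: gs_in; exists x.
- by rewrite hom0 //; exact: gs_0.
- by move=> x y _ Hx _ Hy; rewrite hf.1; exact: gs_add.
- by move=> x _ Hx; rewrite (homN hf); exact: gs_opp.
- by move=> g x _ Hx; rewrite hf.2; exact: gs_act.
Qed.

Lemma span_subl (M : gmod G) (xs ys : seq M) :
  (forall y, y \in xs -> y \in ys) -> forall x, Defs.span xs x -> Defs.span ys x.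
Proof. by move=> H; apply: span_sub; [exact: span_closed| move=> y /H; exact: Defs.span_in]. Qed.

Lemma fg_img (P M : gmod G) (f : P -> M) (S : M -> Prop) : is_hom f -> fg P ->
  (forall x, S (f x)) -> (forall y, S y -> exists x, f x = y) -> fg_sub S.
Proof.
move=> hf [xs Hxs] HS1 HS2; exists (map f xs); split.
- by move=> y /mapP [x _ ->].
- by move=> y /HS2 [x <-]; apply: span_hom.
Qed.

Lemma fg_sub_ext (M : gmod G) (S S' : M -> Prop) : (forall x, S x <-> S' x) ->
  fg_sub S -> fg_sub S'.
Proof. by move=> H [xs [H1 H2]]; exists xs; split=> x; [move/H1/H|move/H/H2]. Qed.

End Basics.
Definition lft (K : choiceType) (M : lmodType int) (f : K -> M) : {freeg K / int} -> M :=
  fglift f.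
HB.instance Definition _ K M f := GRing.isAdditive.Build _ _ (@lft K M f) (lift_is_additive f).

Lemma lftU (K : choiceType) (M : lmodType int) (f : K -> M) k x :
  lft f << k *g x >> = k *: f x.
Proof. exact: liftU. Qed.

Section Free.
Variables (G : group) (X : Type).
Definition FK : choiceType := {classic (gcar G * X)%type}.
Definition FT : zmodType := {freeg FK / int}.

Definition fbas (k : FK) : FT := << (1:int) *g k >>.

Definition fact (g : G) (D : FT) : FT := lft (fun k : FK => fbas ((gmul g k.1, k.2) : FK)) D.

Lemma freeg_eq (M : zmodType) (f1 f2 : FT -> M) :
  (forall x y, f1 (x + y) = f1 x + f1 y) -> (forall x y, f2 (x + y) = f2 x + f2 y) ->
  (forall k, f1 (fbas k) = f2 (fbas k)) -> forall D, f1 D = f2 D.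
Proof.
move=> h1 h2 hb.
have z1 : f1 0 = 0 by move: (h1 0 0); rewrite addr0 => h; apply: (addrI (f1 0)); rewrite addr0 -h.
have z2 : f2 0 = 0 by move: (h2 0 0); rewrite addr0 => h; apply: (addrI (f2 0)); rewrite addr0 -h.
have n1 x : f1 (- x) = - f1 x.
  by apply/eqP; rewrite -subr_eq0 opprK -h1 addNr z1.
have n2 x : f2 (- x) = - f2 x.
  by apply/eqP; rewrite -subr_eq0 opprK -h2 addNr z2.
have m1 x n : f1 (x *+ n) = f1 x *+ n.
  by elim: n => [|n IH]; rewrite ?mulr0n ?z1 // !mulrS h1 IH.
have m2 x n : f2 (x *+ n) = f2 x *+ n.
  by elim: n => [|n IH]; rewrite ?mulr0n ?z2 // !mulrS h2 IH.
have mz1 x z : f1 (x *~ z) = f1 x *~ z by case: z => n; rewrite /intmul ?n1 m1.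
have mz2 x z : f2 (x *~ z) = f2 x *~ z by case: z => n; rewrite /intmul ?n2 m2.
elim/freeg_ind_dom0 => [|k x D _ _ IH]; first by rewrite z1 z2.
rewrite h1 h2 IH; congr (_ + _).
have -> : << k *g x >> = fbas x *~ k by rewrite /fbas freeg_mulz; congr (<< _ *g _ >>); by case: k => n; rewrite /intmul ?natz ?nmulrn ?mulrN1z; rewrite -?pmulrn ?natz.
by rewrite mz1 mz2 hb.
Qed.

Lemma factD g x y : fact g (x + y) = fact g x + fact g y.
Proof. exact: raddfD. Qed.

Lemma fact_bas g k : fact g (fbas k) = fbas ((gmul g k.1, k.2) : FK).
Proof. by rewrite /fact /fbas lftU scale1r. Qed.

Lemma fact1 x : fact (gone G) x = x.
Proof.
apply: (@freeg_eq _ (fact (gone G)) id) => //; first exact: factD.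
by case=> a b; rewrite fact_bas /= gmul1.
Qed.

Lemma factM g h x : fact (gmul g h) x = fact g (fact h x).
Proof.
apply: (@freeg_eq _ (fact (gmul g h)) (fact g \o fact h)) => //; first exact: factD.
  by move=> a b /=; rewrite !factD.
by case=> a b; rewrite /= !fact_bas /= gmulA.
Qed.

Definition Fmod : gmod G := @GMod G FT fact factD fact1 factM.

Definition fb (x : X) : Fmod := fbas ((gone G, x) : FK).

Definition fmap (N : gmod G) (y : X -> N) : Fmod -> N :=
  @lft FK (zmodule N) (fun k : FK => mact N k.1 (y k.2)).

Lemma fmapD (N : gmod G) (y : X -> N) a b : fmap y (a + b) = fmap y a + fmap y b.
Proof. exact: (raddfD (@lft FK (zmodule N) _)). Qed.

Lemma fmap_bas (N : gmod G) (y : X -> N) k : fmap y (fbas k) = mact N k.1 (y k.2).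
Proof. by rewrite /fmap /fbas lftU scale1r. Qed.

Lemma fmap_hom (N : gmod G) (y : X -> N) : is_hom (fmap y).
Proof.
split; first exact: fmapD.
move=> g D.
apply: (@freeg_eq _ (fun D => fmap y (mact Fmod g D)) (fun D => mact N g (fmap y D))) => //.
- by move=> a b; rewrite /= factD fmapD.
- by move=> a b; rewrite fmapD mactD.
by case=> a b; rewrite /= fact_bas !fmap_bas /= mactM.
Qed.

Lemma fmap_fb (N : gmod G) (y : X -> N) x : fmap y (fb x) = y x.
Proof. by rewrite /fb fmap_bas /= mact1. Qed.

End Free.
Arguments fb G {X} x.

Section GroupFacts.
Variable G : group.
Lemma gmulV' (x : G) : gmul x (ginv x) = gone G.
Proof.
set y := ginv x.
transitivity (gmul (gmul (ginv y) y) (gmul x y)); first by rewrite gmulV gmul1.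
rewrite -gmulA (gmulA y x y) /y gmulV gmul1; exact: gmulV.
Qed.
Lemma gmul1r (x : G) : gmul x (gone G) = x.
Proof. by rewrite -(gmulV x) gmulA gmulV' gmul1. Qed.
End GroupFacts.

Section FreeProps.
Variable G : group.

Lemma equalizer_closed (M N : gmod G) (f1 f2 : M -> N) : is_hom f1 -> is_hom f2 ->
  closed (fun x => f1 x = f2 x).
Proof.
move=> h1 h2; split.
- by rewrite !hom0.
- by move=> x y e1 e2; rewrite h1.1 h2.1 e1 e2.
- by move=> x e; rewrite (homN h1) (homN h2) e.
- by move=> g x e; rewrite h1.2 h2.2 e.
Qed.

Lemma Fspan (X : Type) (D : Fmod G X) : gspan (fun v => exists x, v = fb G x) D.
Proof.
elim/freeg_ind_dom0: D => [|k [h x] D _ _ IH]; first exact: gs_0.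
apply: gs_add => //.
have -> : << k *g ((h, x) : FK G X) >> = (fbas ((h, x) : FK G X) : Fmod G X) *~ k.
  rewrite /fbas freeg_mulz; congr (<< _ *g _ >>).
  by case: k => n; rewrite /intmul ?natz ?nmulrn ?mulrN1z; rewrite -?pmulrn ?natz.
apply: closed_Mz; first exact: gspan_closed.
have -> : fbas ((h, x) : FK G X) = mact (Fmod G X) h (fb G x).
  by rewrite /= /fb fact_bas /= gmul1r.
by apply: gs_act; apply: gs_in; exists x.
Qed.

Lemma fmap_unique (X : Type) (N : gmod G) (y : X -> N) (f : Fmod G X -> N) :
  is_hom f -> (forall x, f (fb G x) = y x) -> forall D, f D = fmap y D.
Proof.
move=> hf hb D; apply: (gspan_sub (equalizer_closed hf (fmap_hom y))) (Fspan D).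
by move=> _ [x ->]; rewrite hb fmap_fb.
Qed.

Lemma hom_ext_F (X : Type) (N : gmod G) (f1 f2 : Fmod G X -> N) :
  is_hom f1 -> is_hom f2 -> (forall x, f1 (fb G x) = f2 (fb G x)) -> forall D, f1 D = f2 D.
Proof.
move=> h1 h2 hb D; rewrite (fmap_unique h1 (y := fun x => f1 (fb G x))) //.
by rewrite (fmap_unique h2 (y := fun x => f1 (fb G x))).
Qed.

Lemma Fproj (X : Type) : projective (Fmod G X).
Proof.
move=> A B p f hp hf sp.
have [a Ha] := choice (fun x => sp (f (fb G x))).
exists (fmap a); split; first exact: fmap_hom.
apply: hom_ext_F => //; first exact: hom_comp (fmap_hom a) hp.
by move=> x /=; rewrite fmap_fb Ha.
Qed.

Lemma Ffg (k : nat) : fg (Fmod G 'I_k).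
Proof.
exists [seq fb G i | i <- enum 'I_k] => D.
apply: (gspan_sub (span_closed _)) (Fspan D) => _ [x ->].
by apply: Defs.span_in; apply: map_f; rewrite mem_enum.
Qed.

Lemma Ffree (k : nat) : fg_free (Fmod G 'I_k).
Proof.
exists k, (fb G) => N y; exists (fmap y); split.
- exact: fmap_hom.
- exact: fmap_fb.
- by move=> f' hf' hb; apply: fmap_unique.
Qed.

Lemma F0_zero (D : Fmod G 'I_0) : D = 0.
Proof.
have cl : closed (fun v : Fmod G 'I_0 => v = 0).
  split=> [//|x y hx hy|x hx|g x hx]; by rewrite ?hx ?hy ?addr0 ?oppr0 ?mact0.
by apply: (gspan_sub cl) (Fspan D) => v [[m hm] _].
Qed.

Lemma fg_free_proj (P : gmod G) : fg_free P -> projective P /\ fg P.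
Proof.
case=> k [b Hb]; split.
- move=> A B p f hp hf sp.
  have [a Ha] := choice (fun i => sp (f (b i))).
  have [h [hh hbh _]] := Hb A a.
  exists h; split=> // x.
  have [f0 [hf0 hb0 U]] := Hb B (fun i => f (b i)).
  transitivity (f0 x); last by symmetry; apply: U.
  apply: (U (p \o h)); first exact: hom_comp hh hp.
  by move=> i /=; rewrite hbh Ha.
- have [f [hf hfb _]] := Hb (Fmod G 'I_k) (fb G).
  pose g := fmap (N := P) b.
  have [f0 [hf0 hb0 U]] := Hb P b.
  have gf x : g (f x) = x.
    transitivity (f0 x); last by symmetry; apply: U.
    apply: (U (g \o f)); first exact: hom_comp hf (fmap_hom b).
    by move=> i /=; rewrite hfb /g fmap_fb.
  have [xs Hxs] := Ffg k.
  exists (map g xs) => x; rewrite -(gf x); apply: span_hom; [exact: fmap_hom|exact: Hxs].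
Qed.

End FreeProps.

Section Sub.
Variables (G : group) (M : gmod G) (S : M -> Prop) (hS : closed S).

Definition ST := {classic {x : M | S x}}.
HB.instance Definition _ := Choice.on ST.
Let S0 : S 0. Proof. by case: hS. Qed.
Let SD x y : S x -> S y -> S (x + y). Proof. by case: hS => _ H _ _; apply: H. Qed.
Let SN x : S x -> S (- x). Proof. by case: hS => _ _ H _; apply: H. Qed.
Let SA g x : S x -> S (mact M g x). Proof. by case: hS => _ _ _ H; apply: H. Qed.

Definition sz : ST := exist _ 0 S0.
Definition sadd (a b : ST) : ST := exist _ (sval a + sval b) (SD (svalP a) (svalP b)).
Definition sopp (a : ST) : ST := exist _ (- sval a) (SN (svalP a)).
Definition sact g (a : ST) : ST := exist _ (mact M g (sval a)) (SA g (svalP a)).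

Lemma sval_inj (a b : ST) : sval a = sval b -> a = b.
Proof. by case: a b => [a pa] [b pb] /= e; subst b; congr exist; apply: Prop_irrelevance. Qed.

Lemma saddA : associative sadd. Proof. by move=> a b c; apply: sval_inj; rewrite /= addrA. Qed.
Lemma saddC : commutative sadd. Proof. by move=> a b; apply: sval_inj; rewrite /= addrC. Qed.
Lemma sadd0 : left_id sz sadd. Proof. by move=> a; apply: sval_inj; rewrite /= add0r. Qed.
Lemma saddN : left_inverse sz sopp sadd. Proof. by move=> a; apply: sval_inj; rewrite /= addNr. Qed.

HB.instance Definition _ := GRing.isZmodule.Build ST saddA saddC sadd0 saddN.

Lemma sactD g (x y : ST) : sact g (x + y) = sact g x + sact g y.
Proof. by apply: sval_inj; rewrite /= mactD. Qed.
Lemma sact1 (x : ST) : sact (gone G) x = x.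
Proof. by apply: sval_inj; rewrite /= mact1. Qed.
Lemma sactM g h (x : ST) : sact (gmul g h) x = sact g (sact h x).
Proof. by apply: sval_inj; rewrite /= mactM. Qed.

Definition Smod : gmod G := @GMod G ST sact sactD sact1 sactM.

Lemma sval_hom : is_hom (fun a : Smod => sval a).
Proof. by []. Qed.

End Sub.

Section Lift.
Variable G : group.

Lemma lift_img (P Q N : gmod G) (g : Q -> N) (h : P -> N) :
  projective P -> is_hom g -> is_hom h -> (forall x, exists y, g y = h x) ->
  exists a : P -> Q, is_hom a /\ forall x, g (a x) = h x.
Proof.
move=> pP hg hh Hi.
pose I := Smod (closed_img hg).
pose g' (y : Q) : I := exist _ (g y) (ex_intro _ y erefl).
have Hh x : exists y, g y = h x := Hi x.
pose h' (x : P) : I := exist _ (h x) (Hi x).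
have hg' : is_hom g'.
  by split=> [x y|a x]; apply: sval_inj; rewrite /= ?hg.1 ?hg.2.
have hh' : is_hom h'.
  by split=> [x y|a x]; apply: sval_inj; rewrite /= ?hh.1 ?hh.2.
have sg' : forall b : I, exists y, g' y = b.
  by case=> b [y e]; exists y; apply: sval_inj; rewrite /= e.
have [a [ha Ha]] := pP _ _ g' h' hg' hh' sg'.
by exists a; split=> // x; move: (Ha x) => /(congr1 sval).
Qed.

End Lift.

Section DsumFacts.
Variable G : group.
Implicit Types M N P Q : gmod G.

Lemma hom_pair M N (O : gmod G) (f : O -> M) (g : O -> N) : is_hom f -> is_hom g ->
  is_hom (fun z => (f z, g z) : dsum M N).
Proof. by move=> hf hg; split=> [x y|a x]; rewrite ?hf.1 ?hg.1 ?hf.2 ?hg.2. Qed.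

Lemma hom_fst M N : is_hom (fun z : dsum M N => z.1).
Proof. by []. Qed.
Lemma hom_snd M N : is_hom (fun z : dsum M N => z.2).
Proof. by []. Qed.

Lemma hom_zero M N : is_hom (fun _ : M => 0 : N).
Proof. by split=> *; rewrite ?addr0 ?mact0. Qed.

Lemma hom_inl M N : is_hom (fun x : M => (x, 0) : dsum M N).
Proof. exact: hom_pair (hom_id _) (hom_zero _ _). Qed.
Lemma hom_inr M N : is_hom (fun y : N => (0, y) : dsum M N).
Proof. exact: hom_pair (hom_zero _ _) (hom_id _). Qed.

Lemma hom_add M N (f g : M -> N) : is_hom f -> is_hom g -> is_hom (fun x => f x + g x).
Proof.
move=> hf hg; split=> [x y|a x]; last by rewrite mactD hf.2 hg.2.
by rewrite hf.1 hg.1 addrACA.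
Qed.

Lemma hom_opp M N (f : M -> N) : is_hom f -> is_hom (fun x => - f x).
Proof. by move=> hf; split=> [x y|a x]; rewrite ?hf.1 ?opprD ?mactN ?hf.2. Qed.

Lemma hom_sub M N (f g : M -> N) : is_hom f -> is_hom g -> is_hom (fun x => f x - g x).
Proof. by move=> hf hg; apply: hom_add => //; apply: hom_opp. Qed.

Lemma dsum_proj P Q : projective P -> projective Q -> projective (dsum P Q).
Proof.
move=> pP pQ A B p f hp hf sp.
have [h1 [hh1 H1]] := pP A B p (fun x => f (x, 0)) hp (hom_comp (hom_inl _ _) hf) sp.
have [h2 [hh2 H2]] := pQ A B p (fun y => f (0, y)) hp (hom_comp (hom_inr _ _) hf) sp.
exists (fun z => h1 z.1 + h2 z.2); split.
  exact: hom_add (hom_comp (hom_fst _ _) hh1) (hom_comp (hom_snd _ _) hh2).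
case=> x y /=; rewrite hp.1 H1 H2 -hf.1 /=.
have -> : ((x, 0) + (0, y) : dsum P Q) = (x + 0, 0 + y) by [].
by rewrite addr0 add0r.
Qed.

Lemma dsum_fg P Q : fg P -> fg Q -> fg (dsum P Q).
Proof.
move=> [xs Hx] [ys Hy].
exists (map (fun x => (x, 0) : dsum P Q) xs ++ map (fun y => (0, y) : dsum P Q) ys).
case=> x y.
have -> : ((x, y) : dsum P Q) = (x, 0) + (0, y).
  by have -> : ((x, 0) + (0, y) : dsum P Q) = (x + 0, 0 + y) by []; rewrite addr0 add0r.
apply: Defs.span_add.
- apply: span_subl (span_hom (hom_inl P Q) (Hx x)) => z zi; by rewrite mem_cat zi.
- apply: span_subl (span_hom (hom_inr P Q) (Hy y)) => z zi; by rewrite mem_cat zi orbT.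
Qed.

End DsumFacts.

Section ExSec.
Variable G : group.
Implicit Types M N P Q : gmod G.

Definition fgproj (P : gmod G) := projective P /\ fg P.

Fixpoint Ex (C : gmod G -> Prop) (k : nat) (M : gmod G) (S : M -> Prop) : Prop :=
  match k with
  | 0 => fg_sub S
  | k'.+1 => exists (P : gmod G) (f : P -> M),
      [/\ C P, is_hom f, (forall x, S (f x)), (forall y, S y -> exists x, f x = y)
        & @Ex C k' P (fun x => f x = 0)]
  end.

Lemma Ex_ext C k M (S S' : M -> Prop) : (forall x, S x <-> S' x) -> Ex C k S -> Ex C k S'.
Proof.
case: k => [|k] H; first exact: fg_sub_ext.
case=> P [f [CP hf H1 H2 HE]]; exists P, f; split=> //.
- by move=> x; apply/H.
- by move=> y /H /H2.
Qed.

Lemma Ex_mono (C1 C2 : gmod G -> Prop) : (forall P, C1 P -> C2 P) ->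
  forall k M (S : M -> Prop), Ex C1 k S -> Ex C2 k S.
Proof.
move=> HC; elim=> [//|k IH] M S [P [f [CP hf H1 H2 HE]]].
by exists P, f; split=> //; [apply: HC | apply: IH].
Qed.

Lemma Ex_fg C : (forall P, C P -> fg P) -> forall k M (S : M -> Prop), Ex C k S -> fg_sub S.
Proof.
move=> HC [//|k] M S [P [f [CP hf H1 H2 HE]]].
exact: fg_img hf (HC _ CP) H1 H2.
Qed.

Lemma Ex_inj C k (R X : gmod G) (i : R -> X) (S : R -> Prop) (T : X -> Prop) :
  is_hom i -> (forall r, i r = 0 -> r = 0) ->
  (forall r, S r -> T (i r)) -> (forall x, T x -> exists2 r, S r & i r = x) ->
  Ex C k S -> Ex C k T.
Proof.
move=> hi inj HST HTS; case: k => [|k].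
  case=> xs [H1 H2]; exists (map i xs); split.
    by move=> _ /mapP [x xi ->]; apply: HST; apply: H1.
  by move=> x /HTS [r /H2 Hr <-]; apply: span_hom.
case=> P [f [CP hf H1 H2 HE]]; exists P, (i \o f); split=> //.
- exact: hom_comp hf hi.
- by move=> x; apply: HST.
- by move=> x /HTS [r /H2 [y <-] <-]; exists y.
apply: Ex_ext HE => x /=; split=> [->|/inj //]; exact: hom0.
Qed.

Lemma closed_preim M N (S : N -> Prop) (f : M -> N) : closed S -> is_hom f ->
  closed (fun x => S (f x)).
Proof.
case=> S0 SD SN SA hf; split.
- by rewrite hom0.
- by move=> x y a b; rewrite hf.1; auto.
- by move=> x a; rewrite (homN hf); auto.
- by move=> g x a; rewrite hf.2; auto.
Qed.

Lemma fg_pres M (S : M -> Prop) : closed S -> fg_sub S ->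
  exists (n : nat) (f : Fmod G 'I_n -> M),
    [/\ is_hom f, (forall x, S (f x)) & (forall y, S y -> exists x, f x = y)].
Proof.
move=> cS [xs [H1 H2]].
pose y (i : 'I_(size xs)) := nth 0 xs i.
exists (size xs), (fmap y); split; first exact: fmap_hom.
- move=> x; apply: (gspan_sub (closed_preim cS (fmap_hom y))) (Fspan x) => _ [i ->].
  by rewrite fmap_fb; apply: H1; rewrite /y mem_nth.
- have cI := closed_img (fmap_hom y).
  move=> z /H2; apply: (span_sub cI) => w /(nthP 0) [i ilt <-].
  by exists (fb G (Ordinal ilt)); rewrite fmap_fb.
Qed.

End ExSec.
Arguments fgproj {G} P.

Section Transfer.
Variable G : group.
Implicit Types M N P Q : gmod G.

Lemma pair_eq0 M N (a : M) (b : N) : ((a, b) : dsum M N) = 0 <-> a = 0 /\ b = 0.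
Proof. by split=> [[-> ->]|[-> ->]]. Qed.

Lemma Tk k : forall M N P Q (f : P -> M) (g : Q -> N) (phi : M -> N) (psi : N -> M),
  fgproj P -> projective Q -> is_hom f -> is_hom g -> is_hom phi -> is_hom psi ->
  (forall x, exists y, g y = phi (f x)) ->
  (forall y, exists x, f x = psi (g y)) ->
  (forall x, psi (phi (f x)) = f x) ->
  Ex fgproj k (fun y : Q => g y = 0) -> Ex fgproj k (fun x : P => f x = 0).
Proof.
elim: k => [|k IH] M N P Q f g phi psi [pP fP] pQ hf hg hphi hpsi Him1 Him2 Hid HE.
all: have [a [ha Ha]] := lift_img pP hg (hom_comp hf hphi) Him1.
all: have [b [hb Hb]] := lift_img pQ hf (hom_comp hg hpsi) Him2.
all: have ka x : f x = 0 -> g (a x) = 0 by move=> e; rewrite Ha /= e hom0.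
all: have kb y : g y = 0 -> f (b y) = 0 by move=> e; rewrite Hb /= e hom0.
all: pose c x := x - b (a x).
all: have hc : is_hom c by apply: hom_sub (hom_id _) (hom_comp ha hb).
all: have kc x : f (c x) = 0 by rewrite /c (homB hf) Hb /= Ha /= Hid subrr.
all: have dec x : x = b (a x) + c x by rewrite /c addrC subrK.
- case: HE => ys [Hy1 Hy2]; case: fP => ps Hp.
  exists (map b ys ++ map c ps); split.
    move=> x; rewrite mem_cat => /orP [] /mapP [z zi ->]; [apply: kb; exact: Hy1 | exact: kc].
  move=> x fx; rewrite (dec x); apply: Defs.span_add.
  + apply: span_subl (span_hom hb (Hy2 _ (ka _ fx))) => z zi; by rewrite mem_cat zi.
  + apply: span_subl (span_hom hc (Hp x)) => z zi; by rewrite mem_cat zi orbT.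
- case: HE => R [h [[pR fR] hh H1 H2 HE']].
  pose h' (z : dsum R P) := b (h z.1) + c z.2.
  have hh' : is_hom h'.
    exact: hom_add (hom_comp (hom_fst _ _) (hom_comp hh hb)) (hom_comp (hom_snd _ _) hc).
  have kh' z : f (h' z) = 0 by rewrite /h' hf.1 kb ?H1 // kc addr0.
  exists (dsum R P), h'; split=> //.
  + by split; [apply: dsum_proj | apply: dsum_fg].
  + move=> x fx; have [r hr] := H2 _ (ka _ fx).
    by exists (r, x); rewrite /h' /= hr -dec.
  pose g' (w : dsum R P) := ((h w.1, w.2) : dsum Q P).
  pose phi' (x : P) := ((a x, x) : dsum Q P).
  pose psi' (w : dsum Q P) := b w.1 + c w.2.
  apply: (IH P (dsum Q P) (dsum R P) (dsum R P) h' g' phi' psi').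
  + by split; [apply: dsum_proj | apply: dsum_fg].
  + exact: dsum_proj.
  + exact: hh'.
  + exact: hom_pair (hom_comp (hom_fst _ _) hh) (hom_snd _ _).
  + exact: hom_pair ha (hom_id _).
  + exact: hom_add (hom_comp (hom_fst _ _) hb) (hom_comp (hom_snd _ _) hc).
  + move=> z; have [r hr] := H2 _ (ka _ (kh' z)).
    by exists (r, h' z); rewrite /g' /phi' /= hr.
  + by move=> w; exists w.
  + by move=> z; rewrite /psi' /phi' /= -dec.
  apply: (Ex_inj (i := fun r : R => ((r, 0) : dsum R P))) HE'.
  + exact: hom_inl.
  + by move=> r /pair_eq0 [].
  + by move=> r hr; rewrite /g' /= hr.
  + case=> r x; rewrite /g' /=; case/pair_eq0 => hr hx; exists r => //; by rewrite hx.
Qed.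

Lemma Tr k M N (S : M -> Prop) (S' : N -> Prop) (phi : M -> N) (psi : N -> M) :
  is_hom phi -> is_hom psi ->
  (forall x, S x -> S' (phi x)) -> (forall y, S' y -> S (psi y)) ->
  (forall x, S x -> psi (phi x) = x) ->
  Ex fgproj k S' -> Ex fgproj k S.
Proof.
move=> hphi hpsi H1 H2 H3; case: k => [|k].
  case=> ys [Hy1 Hy2]; exists (map psi ys); split.
    by move=> _ /mapP [y yi ->]; apply: H2; apply: Hy1.
  by move=> x Sx; rewrite -(H3 _ Sx); apply: span_hom => //; apply: Hy2; apply: H1.
case=> Q [g [[pQ fQ] hg Hg1 Hg2 HE]].
exists Q, (psi \o g); split=> //.
- exact: hom_comp hg hpsi.
- by move=> y; apply: H2.
- move=> x Sx; have [y hy] := Hg2 _ (H1 _ Sx).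
  by exists y; rewrite /= hy H3.
apply: (Tk (N := N) (g := g) (phi := phi) (psi := psi)).
- by split.
- exact: pQ.
- exact: hom_comp hg hpsi.
- exact: hg.
- exact: hphi.
- exact: hpsi.
- by move=> y; apply: Hg2; apply: H1; apply: H2.
- by move=> y; exists y.
- by move=> y; apply: H3; apply: H2.
- exact: HE.
Qed.

Lemma Univ k M (S : M -> Prop) P (f : P -> M) :
  Ex fgproj k.+1 S -> fgproj P -> is_hom f ->
  (forall x, S (f x)) -> (forall y, S y -> exists x, f x = y) ->
  Ex fgproj k (fun x => f x = 0).
Proof.
case=> Q [g [[pQ fQ] hg Hg1 Hg2 HE]] cP hf H1 H2.
apply: (Tk (N := M) (g := g) (phi := id) (psi := id)).
- exact: cP.
- exact: pQ.
- exact: hf.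
- exact: hg.
- exact: hom_id.
- exact: hom_id.
- by move=> x; apply: Hg2.
- by move=> y; apply: H2.
- by [].
- exact: HE.
Qed.

End Transfer.

Section Res.
Variable G : group.
Implicit Types M N P Q : gmod G.

Lemma SumP k M (S : M -> Prop) P : S 0 -> fgproj P -> Ex fgproj k S ->
  Ex fgproj k (fun z : dsum P M => S z.2).
Proof.
move=> S0 [pP fP]; case: k => [|k].
  case=> xs [Hx1 Hx2]; case: fP => ps Hp.
  exists (map (fun p => (p, 0) : dsum P M) ps ++ map (fun x => (0, x) : dsum P M) xs); split.
    by move=> z; rewrite mem_cat => /orP [] /mapP [w wi ->] //=; apply: Hx1.
  case=> p x /= Sx.
  have -> : ((p, x) : dsum P M) = (p, 0) + (0, x).
    by have -> : ((p, 0) + (0, x) : dsum P M) = (p + 0, 0 + x) by []; rewrite addr0 add0r.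
  apply: Defs.span_add.
  - apply: span_subl (span_hom (hom_inl P M) (Hp p)) => z zi; by rewrite mem_cat zi.
  - apply: span_subl (span_hom (hom_inr P M) (Hx2 _ Sx)) => z zi; by rewrite mem_cat zi orbT.
case=> Q [g [[pQ fQ] hg H1 H2 HE]].
exists (dsum P Q), (fun z => (z.1, g z.2) : dsum P M); split.
- by split; [apply: dsum_proj | apply: dsum_fg].
- exact: hom_pair (hom_fst _ _) (hom_comp (hom_snd _ _) hg).
- by move=> z /=.
- by case=> p x /= /H2 [q <-]; exists (p, q).
apply: (Ex_inj (i := fun q : Q => ((0, q) : dsum P Q))) HE.
- exact: hom_inr.
- by move=> q /pair_eq0 [].
- by move=> q /= ->.
- case=> p q; rewrite /=; case/pair_eq0 => hp hq; exists q => //; by rewrite hp.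
Qed.

Lemma Ex_free k : forall M (S : M -> Prop), Ex fgproj k S -> Ex (@fg_free G) k S.
Proof.
elim: k => [//|k IH] M S HE.
have HE' := HE; case: HE' => P [f [[pP fP] hf H1 H2 _]].
have [n [pi [hpi _ Hpi]]] : exists (n : nat) (pi : Fmod G 'I_n -> P),
    [/\ is_hom pi, (forall x : Fmod G 'I_n, True) & (forall y, True -> exists x, pi x = y)].
  apply: (@fg_pres G P (fun _ => True)); first by split.
  by case: fP => ps Hp; exists ps; split.
exists (Fmod G 'I_n), (f \o pi); split.
- exact: Ffree.
- exact: hom_comp hpi hf.
- by move=> x; apply: H1.
- by move=> y /H2 [x <-]; have [v <-] := Hpi x I; exists v.
apply: IH; apply: (Univ HE).
- by split; [apply: Fproj | apply: Ffg].
- exact: hom_comp hpi hf.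
- by move=> x; apply: H1.
- by move=> y /H2 [x <-]; have [v <-] := Hpi x I; exists v.
Qed.

Definition res M (S : M -> Prop) (Q : nat -> gmod G) (a : Q 0 -> M)
    (d : forall j, Q j.+1 -> Q j) :=
  [/\ is_hom a /\ (forall j, is_hom (d j)),
      (forall x, S (a x)) /\ (forall y, S y -> exists x, a x = y),
      (forall x, a x = 0 <-> exists z, d 0 z = x),
      (forall j (x : Q j.+1), d j x = 0 <-> exists z, d j.+1 z = x) &
      (forall j, projective (Q j))].

Record stage := Stage { s_src : gmod G; s_tgt : gmod G; s_map : s_src -> s_tgt }.
Arguments s_map : clear implicits.

Definition kerT (s : stage) := {x : s_src s | s_map s x = 0}.

Definition step (s : stage) : stage :=
  @Stage (Fmod G (kerT s)) (s_src s) (fmap (fun x : kerT s => sval x)).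

Lemma step_hom s : is_hom (s_map (step s)).
Proof. exact: fmap_hom. Qed.

Lemma step_exact s : is_hom (s_map s) ->
  forall x, s_map s x = 0 <-> exists z, s_map (step s) z = x.
Proof.
move=> hs x; split=> [hx|[z <-]].
  by exists (fb G (exist _ x hx : kerT s)); rewrite /= fmap_fb.
apply: (gspan_sub (closed_preim (closed_ker hs) (fmap_hom _))) (Fspan z) => _ [w ->].
by rewrite fmap_fb; case: w.
Qed.

Lemma tail M (S : M -> Prop) : closed S -> exists (Q : nat -> gmod G) a d, @res M S Q a d.
Proof.
move=> cS.
pose init := @Stage (Fmod G {x : M | S x}) M (fmap (fun x : {x : M | S x} => sval x)).
pose Q j := s_src (iter j step init).
exists Q, (s_map init), (fun j => s_map (iter j.+1 step init)).
have hinit : is_hom (s_map init) by apply: fmap_hom.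
have hit j : is_hom (s_map (iter j step init)) by case: j => [|j] //=; apply: step_hom.
split.
- by split=> // j; apply: step_hom.
- split.
    move=> x; apply: (gspan_sub (closed_preim cS (fmap_hom _))) (Fspan x) => _ [w ->].
    by rewrite fmap_fb; case: w.
  by move=> y Sy; exists (fb G (exist _ y Sy)); rewrite /= fmap_fb.
- exact: step_exact.
- by move=> j x; apply: (step_exact (hit j.+1)).
- by case=> [|j]; apply: Fproj.
Qed.

Definition sQ P (Q' : nat -> gmod G) (j : nat) : gmod G :=
  match j with 0 => P | j'.+1 => Q' j' end.

Definition sd P (Q' : nat -> gmod G) (a' : Q' 0 -> P) (d' : forall j, Q' j.+1 -> Q' j)
  (j : nat) : sQ P Q' j.+1 -> sQ P Q' j :=
  match j return sQ P Q' j.+1 -> sQ P Q' j with 0 => a' | j'.+1 => d' j' end.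

Lemma splice M (S : M -> Prop) P (f : P -> M) (Q' : nat -> gmod G) a' d' :
  projective P -> is_hom f -> (forall x, S (f x)) -> (forall y, S y -> exists x, f x = y) ->
  @res P (fun x => f x = 0) Q' a' d' ->
  @res M S (sQ P Q') f (sd a' d').
Proof.
move=> pP hf H1 H2 [[ha' hd'] [I1 I2] E0 Ej pQ']; split.
- split=> //; case=> [|j] //; exact: hd' j.
- by split.
- by move=> x; split=> [/I2|[z <-]] //; apply: I1.
- by case=> [|j] x /=; [apply: E0 | apply: Ej].
- by case.
Qed.

Lemma ExB (C : gmod G -> Prop) : (forall P, C P -> projective P) ->
  (forall n, C (Fmod G 'I_n)) ->
  forall k M (S : M -> Prop), closed S -> Ex C k S ->
  exists (Q : nat -> gmod G) a d, @res M S Q a d /\ forall j, (j <= k)%N -> C (Q j).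
Proof.
move=> Cp CF; elim=> [|k IH] M S cS.
  move=> HS; have [n [f [hf H1 H2]]] := fg_pres cS HS.
  have [Q' [a' [d' R']]] := tail (closed_ker hf).
  exists (sQ (Fmod G 'I_n) Q'), f, (sd a' d'); split.
    by apply: splice => //; apply: Fproj.
  by case=> [|j] // _; apply: CF.
case=> P [f [CP hf H1 H2 HE]].
have [Q' [a' [d' [R' CQ']]]] := IH _ _ (closed_ker hf) HE.
exists (sQ P Q'), f, (sd a' d'); split.
  by apply: splice => //; apply: Cp.
by case=> [|j] //= hj; apply: CQ'.
Qed.

End Res.

Section Cx.
Variable G : group.
Variables (X : nat -> gmod G) (dl : forall i, X i.+1 -> X i) (S : X 0 -> Prop).

Definition Tgt (i : nat) : X i -> Prop :=
  match i return X i -> Prop with 0 => S | j.+1 => fun x => @dl j x = 0 end.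
Arguments Tgt : clear implicits.

Definition cx_exact (i : nat) :=
  is_hom (@dl i) /\
  ((forall x, Tgt i (@dl i x)) /\ (forall y, Tgt i y -> exists x, @dl i x = y)).

Lemma Cx_Ex N : (forall i, (i < N)%N -> cx_exact i) ->
  (forall i, (0 < i <= N)%N -> fgproj (X i)) -> fg_sub (Tgt N) ->
  forall k i, (i + k <= N)%N -> Ex fgproj k (Tgt i).
Proof.
move=> HE HC HN; elim=> [|k IH] i hik.
  rewrite addn0 in hik; case: (ltngtP i N) hik => // [ltiN _|-> //].
  have [hd [H1 H2]] := HE _ ltiN.
  by apply: fg_img hd _ H1 H2; case: (HC i.+1); rewrite ?ltiN.
have ltiN : (i < N)%N by rewrite addnS in hik; apply: leq_ltn_trans hik; rewrite leq_addr.
have [hd [H1 H2]] := HE _ ltiN.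
exists (X i.+1), (@dl i); split=> //.
  by apply: HC; rewrite ltiN.
by apply: IH; rewrite addSnnS.
Qed.

Lemma Chain_univ N m : (forall i, (i < N)%N -> cx_exact i) ->
  (forall i, (0 < i <= N)%N -> fgproj (X i)) -> Ex fgproj m S ->
  forall i, (i <= N)%N -> (i <= m)%N -> Ex fgproj (m - i) (Tgt i).
Proof.
move=> HE HC HS; elim=> [|i IH] hiN him; first by rewrite subn0.
have := IH (ltnW hiN) (ltnW him).
have -> : (m - i = (m - i.+1).+1)%N by rewrite subnS prednK // subn_gt0.
move=> HEi; have [hd [H1 H2]] := HE _ hiN.
by apply: (Univ HEi) => //; apply: HC; rewrite hiN.
Qed.

End Cx.
Arguments Tgt {G X} dl S i x.
Arguments cx_exact {G X} dl S i.

Section Main.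
Variables (G : group) (ZGP : gmod G) (eps : ZGP -> Zmod G).
Hypothesis heps : is_hom eps.
Hypothesis hsurj : forall z : Zmod G, exists x, eps x = z.

Let Dl : ZGP -> Prop := Delta eps.

Lemma Dl_closed : closed Dl.
Proof. exact: closed_ker heps. Qed.

Lemma psi_lift (P0 : gmod G) (eta : P0 -> Zmod G) : projective P0 -> is_hom eta ->
  exists psi : P0 -> ZGP, is_hom psi /\ forall x, eps (psi x) = eta x.
Proof. by move=> pP he; apply: pP. Qed.

Lemma DK1 k (P0 : gmod G) (eta : P0 -> Zmod G) : fgproj P0 -> is_hom eta ->
  Ex fgproj k Dl -> Ex fgproj k (fun z : dsum P0 ZGP => etaeps eta eps z = 0).
Proof.
move=> cP he HE.
have [psi [hpsi Hpsi]] := psi_lift cP.1 he.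
have HS := SumP (hom0 heps) cP HE.
apply: (Tr (phi := fun z : dsum P0 ZGP => ((z.1, z.2 + psi z.1) : dsum P0 ZGP))
           (psi := fun z : dsum P0 ZGP => ((z.1, z.2 - psi z.1) : dsum P0 ZGP))) HS.
- exact: hom_pair (hom_fst _ _) (hom_add (hom_snd _ _) (hom_comp (hom_fst _ _) hpsi)).
- exact: hom_pair (hom_fst _ _) (hom_sub (hom_snd _ _) (hom_comp (hom_fst _ _) hpsi)).
- by case=> x y; rewrite /etaeps /Dl /Delta /= heps.1 Hpsi addrC.
- by case=> x y; rewrite /etaeps /Dl /Delta /= (homB heps) Hpsi addrC subrK.
- by case=> x y _ /=; rewrite addrK.
Qed.

Lemma DK2 k (P0 : gmod G) (eta : P0 -> Zmod G) : projective P0 -> is_hom eta ->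
  Ex fgproj k (fun z : dsum P0 ZGP => etaeps eta eps z = 0) -> Ex fgproj k Dl.
Proof.
move=> pP he HE.
have [psi [hpsi Hpsi]] := psi_lift pP he.
apply: (Tr (phi := fun y : ZGP => ((0, y) : dsum P0 ZGP))
           (psi := fun z : dsum P0 ZGP => z.2 + psi z.1)) HE.
- exact: hom_inr.
- exact: hom_add (hom_snd _ _) (hom_comp (hom_fst _ _) hpsi).
- by move=> y; rewrite /etaeps /Dl /Delta /= hom0 // add0r.
- by case=> x y; rewrite /etaeps /Dl /Delta /= heps.1 Hpsi addrC.
- by move=> y _ /=; rewrite hom0 // addr0.
Qed.

Lemma exact_cx (P : nat -> gmod G) (eta : P 0 -> Zmod G)
  (d : forall i, augC P ZGP i.+1 -> augC P ZGP i) N :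
  exact_upto d (etaeps eta eps : augC P ZGP 0 -> Zmod G) N ->
  forall i, (i < N)%N ->
    cx_exact (X := augC P ZGP) d (fun z => etaeps eta eps z = 0) i.
Proof.
case=> _ hd _ E0 Ej i hi; split; first exact: hd.
case: i hi => [|i] hi /=.
  by split=> [x|y /E0 //]; apply/E0; exists x.
by split=> [x|y /(Ej _ hi) //]; apply/(Ej _ hi); exists x.
Qed.

Definition F0 := Fmod G 'I_0.

Definition chL (Q : nat -> gmod G) : nat -> gmod G := sQ F0 Q.

Definition chd (Q : nat -> gmod G) (a : Q 0 -> ZGP) (d : forall j, Q j.+1 -> Q j)
  (i : nat) : augC (chL Q) ZGP i.+1 -> augC (chL Q) ZGP i :=
  match i return augC (chL Q) ZGP i.+1 -> augC (chL Q) ZGP i with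
  | 0 => fun q => ((0, a q) : dsum F0 ZGP)
  | j.+1 => d j
  end.

Definition eta0 : F0 -> Zmod G := fun _ => 0.

Lemma chain_exact (Q : nat -> gmod G) a d : @res G ZGP Dl Q a d ->
  forall N, exact_upto (chd a d) (etaeps eta0 eps : augC (chL Q) ZGP 0 -> Zmod G) N.
Proof.
case=> [[ha hd] [I1 I2] E0 Ej _] N; split.
- exact: hom_add (hom_comp (hom_fst _ _) (hom_zero _ _)) (hom_comp (hom_snd _ _) heps).
- case=> [|i] _ /=; last exact: hd.
  exact: hom_pair (hom_zero _ _) ha.
- by move=> z; have [x hx] := hsurj z; exists ((0, x) : dsum F0 ZGP); rewrite /etaeps /eta0 /= add0r.
- case=> u y; rewrite /etaeps /eta0 /= add0r (F0_zero u); split.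
    by move=> /I2 [q hq]; exists q; rewrite /= hq.
  by case=> q /= [<-]; apply: I1.
- case=> [|i] _ x /=.
    split; first by move=> h; apply/E0; case: h.
    by move/E0 => hx; rewrite hx.
  exact: Ej.
Qed.

Lemma Dl_of_res k (Q : nat -> gmod G) a d : @res G ZGP Dl Q a d ->
  (forall j, (j <= k)%N -> fgproj (Q j)) ->
  fg_sub (Tgt (X := augC (chL Q) ZGP) (chd a d) (fun z => etaeps eta0 eps z = 0) k.+1) ->
  Ex fgproj k.+1 Dl.
Proof.
move=> R CQ Hfg.
apply: (DK2 (eta := eta0)); first exact: Fproj.
  exact: hom_zero.
apply: (@Cx_Ex G (augC (chL Q) ZGP) (chd a d) (fun z => etaeps eta0 eps z = 0) k.+1
   _ _ Hfg k.+1 0) => //.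
- by move=> i hi; apply: exact_cx (chain_exact R k.+1) _ hi.
- by case=> [//|i] /= hi; apply: CQ.
Qed.

Lemma FP_Ex n' : pair_FP eps n'.+1 -> Ex fgproj n' Dl.
Proof.
case=> Q [d [a [[ha hd] [I1 I2] E0 Ej [pQ fQ]]]].
have CE : forall i, cx_exact (X := sQ ZGP Q) (sd a d) Dl i.
  case=> [|[|j]]; split=> //=; try exact: hd.
  - by split=> [x|y /E0 //]; apply/E0; exists x.
  - by split=> [x|y /Ej //]; apply/Ej; exists x.
have HC : forall i, (0 < i <= n')%N -> fgproj (sQ ZGP Q i).
  case=> [//|i] /= hi; split; first exact: pQ.
  by apply: fQ; move: hi; lia.
have Hfg : fg_sub (Tgt (X := sQ ZGP Q) (sd a d) Dl n').
  have [hdl [H1 H2]] := CE n'.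
  by apply: fg_img hdl (fQ n' (ltnSn _)) H1 H2.
exact: (@Cx_Ex G (sQ ZGP Q) (sd a d) Dl n' (fun i _ => CE i) HC Hfg n' 0).
Qed.

Lemma Ex_FP n' : Ex fgproj n' Dl -> pair_FP eps n'.+1.
Proof.
move=> HE.
have [Q [a [d [[[ha hd] [I1 I2] E0 Ej pQ] CQ]]]] :=
  @ExB G fgproj (fun Q (h : fgproj Q) => h.1) (fun n => conj (@Fproj G 'I_n) (Ffg G n)) n' ZGP Dl Dl_closed HE.
exists Q, d, a; split=> //.
by split=> // j hj; case: (CQ j hj).
Qed.

Lemma Ex_ii n' : Ex fgproj n' Dl -> forall j, (j.+1 < n'.+1)%N ->
  forall (P : nat -> gmod G) (eta : P 0%N -> Zmod G)
         (d : forall i, augC P ZGP i.+1 -> augC P ZGP i),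
    is_hom eta ->
    exact_upto d (etaeps eta eps : augC P ZGP 0%N -> Zmod G) j.+1 ->
    (forall i, (i <= j.+1)%N -> projective (P i) /\ fg (P i)) ->
    fg_sub (fun x : P j.+1 => d j x = 0).
Proof.
move=> HE j hj P eta d he hx hP.
have K := DK1 (hP 0 isT) he HE.
have HC : forall i, (0 < i <= j.+1)%N -> fgproj (augC P ZGP i).
  by case=> [//|i] /= hi; apply: hP.
have := @Chain_univ G (augC P ZGP) d (fun z => etaeps eta eps z = 0) j.+1 n'
  (fun i hi => exact_cx hx hi) HC K j.+1 (leqnn _) hj.
by move/(@Ex_fg G fgproj (fun Q (h : fgproj Q) => h.2)).
Qed.

Lemma ii_Ex n' : fg_sub Dl ->
  (forall j, (j.+1 < n'.+1)%N ->
    forall (P : nat -> gmod G) (eta : P 0%N -> Zmod G)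
           (d : forall i, augC P ZGP i.+1 -> augC P ZGP i),
      is_hom eta ->
      exact_upto d (etaeps eta eps : augC P ZGP 0%N -> Zmod G) j.+1 ->
      (forall i, (i <= j.+1)%N -> projective (P i) /\ fg (P i)) ->
      fg_sub (fun x : P j.+1 => d j x = 0)) ->
  Ex fgproj n' Dl.
Proof.
move=> H0 H; suff: forall k, (k <= n')%N -> Ex fgproj k Dl by apply.
elim=> [//|k IH] hk.
have HE := IH (ltnW hk).
have [Q [a [d [R CQ]]]] :=
  @ExB G fgproj (fun Q (h : fgproj Q) => h.1) (fun n => conj (@Fproj G 'I_n) (Ffg G n)) k ZGP Dl Dl_closed HE.
apply: (Dl_of_res R CQ).
apply: (H k hk (chL Q) eta0 (chd a d)).
- exact: hom_zero.
- exact: chain_exact R k.+1.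
- case=> [|i] hi; first by split; [apply: Fproj | apply: Ffg].
  exact: CQ.
Qed.

Lemma Ex_iii n' : Ex fgproj n' Dl ->
   exists (L : nat -> gmod G) (eta : L 0%N -> Zmod G)
          (d : forall i, augC L ZGP i.+1 -> augC L ZGP i),
     [/\ is_hom eta,
         exact_upto d (etaeps eta eps : augC L ZGP 0%N -> Zmod G) n'.+1 &
         forall i, (i <= n'.+1)%N -> fg_free (L i)].
Proof.
move/Ex_free => HE.
have [Q [a [d [R CQ]]]] :=
  @ExB G (@fg_free G) (fun Q (h : fg_free Q) => (fg_free_proj h).1) (fun n => Ffree G n) n' ZGP Dl Dl_closed HE.
exists (chL Q), eta0, (chd a d); split.
- exact: hom_zero.
- exact: chain_exact R _.
- by case=> [|i] hi; [apply: Ffree | apply: CQ].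
Qed.

Lemma iii_Ex n' :
   (exists (L : nat -> gmod G) (eta : L 0%N -> Zmod G)
          (d : forall i, augC L ZGP i.+1 -> augC L ZGP i),
     [/\ is_hom eta,
         exact_upto d (etaeps eta eps : augC L ZGP 0%N -> Zmod G) n'.+1 &
         forall i, (i <= n'.+1)%N -> fg_free (L i)]) ->
   Ex fgproj n' Dl.
Proof.
case=> L [eta [d [he hx hL]]].
apply: (DK2 (eta := eta)) => //; first exact: (fg_free_proj (hL 0 isT)).1.
have CE : forall i, (i < n')%N -> cx_exact (X := augC L ZGP) d (fun z => etaeps eta eps z = 0) i.
  by move=> i hi; apply: (exact_cx hx); apply: ltnW.
have HC : forall i, (0 < i <= n')%N -> fgproj (augC L ZGP i).
  case=> [//|i] /= hi; apply: fg_free_proj; apply: hL.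
  by move: hi; lia.
have Hfg : fg_sub (Tgt (X := augC L ZGP) d (fun z => etaeps eta eps z = 0) n').
  have [hdl [H1 H2]] := exact_cx hx (ltnSn n').
  exact: fg_img hdl (fg_free_proj (hL n'.+1 (leqnn _))).2 H1 H2.
exact: (@Cx_Ex G (augC L ZGP) d (fun z => etaeps eta eps z = 0) n' CE HC Hfg n' 0).
Qed.

End Main.


Theorem lemma3p1 (G : group) (m : nat) (Ps : 'I_m -> subgroup G)
  (ZGP : gmod G) (e : 'I_m -> ZGP) (eps : ZGP -> Zmod G) (n : nat) :
  fin_gen_group G -> (0 < m)%N ->
  is_perm_module Ps e -> is_augmentation e eps -> (1 <= n)%N ->
  (pair_FP eps n <->
   (fg_sub (Delta eps) /\
    forall (j : nat), (j.+1 < n)%N ->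
    forall (P : nat -> gmod G) (eta : P 0%N -> Zmod G)
           (d : forall i, augC P ZGP i.+1 -> augC P ZGP i),
      is_hom eta ->
      exact_upto d (etaeps eta eps : augC P ZGP 0%N -> Zmod G) j.+1 ->
      (forall i, (i <= j.+1)%N -> projective (P i) /\ fg (P i)) ->
      fg_sub (fun x : P j.+1 => d j x = 0)))
  /\
  (pair_FP eps n <->
   exists (L : nat -> gmod G) (eta : L 0%N -> Zmod G)
          (d : forall i, augC L ZGP i.+1 -> augC L ZGP i),
     [/\ is_hom eta,
         exact_upto d (etaeps eta eps : augC L ZGP 0%N -> Zmod G) n &
         forall i, (i <= n)%N -> fg_free (L i)]).
Proof.
move=> _ m0 _ [heps he1] hn.
have hsurj : forall z : Zmod G, exists x, eps x = z.
  move=> z; exists (e (Ordinal m0) *~ z).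
  by rewrite (homMz heps) he1; exact: intz.
case: n hn => [//|n'] _.
split; split.
- move/FP_Ex => HE; split.
    exact: (@Ex_fg G fgproj (fun Q (h : fgproj Q) => h.2) n' _ _ HE).
  exact: (Ex_ii heps hsurj HE).
- case=> H0 H; apply: (Ex_FP heps); exact: (ii_Ex heps hsurj H0 H).
- by move/FP_Ex; apply: (Ex_iii heps hsurj).
- by move/(iii_Ex heps hsurj); apply: (Ex_FP heps).
Qed.
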